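(* Let $n\ge 1$, $d_1,\dots,d_n\ge 1$, $L_i\in\mathbb{C}^{d_i\times d_i}$ ($i=1,\dots,n$) and $C_{i,i-1}\in\mathbb{C}^{d_i\times d_{i-1}}$ ($i=2,\dots,n$). Assume: (i) each $L_i$ is invertible and diagonalizable, $L_iV_i=V_i\Lambda_i$ with $V_i$ invertible and $\Lambda_i=\mathrm{diag}(\lambda_{i,1},\dots,\lambda_{i,d_i})$; (ii) $\sigma(L_i)\cap\sigma(L_j)=\emptyset$ for all $i\neq j$; (iii) $\|L_1\|<\|L_2\|<\cdots<\|L_n\|\le 1$. Then for every $i\in\{1,\dots,n\}$, $s_i\in\{1,\dots,d_i\}$, $x=(x_1,\dots,x_n)\in\mathbb{C}^{d_1}\times\cdots\times\mathbb{C}^{d_n}$ and $t\in\mathbb{N}$, $$\big|\Psi_{i,s_i}(\mathsf{Lin}^{\circ t}(x))-\Psi_{i,s_i}(\mathsf{Nom}^{\circ t}(\mathsf{pert}(x)))\big|\le\|\psi_{i,s_i}\|\sum_{j=1}^{i-1}\|D_{i,j}\|\,\big\|L_j^t\,\mathsf{pert}_j(x_1,\dots,x_j)\big\|,$$ and $$\lim_{t\to\infty}\frac{\big|\Psi_{i,s_i}(\mathsf{Lin}^{\circ t}(x))-\Psi_{i,s_i}(\mathsf{Nom}^{\circ t}(\mathsf{pert}(x)))\big|}{\|L_i\|^t}=0.$$ (Equivalently, in Koopman notation, $|(\mathcal U_{\mathsf{Lin}}^{\circ t}\Psi_{i,s_i})(x)-(\mathcal U_{\mathsf{Nom}}^{\circ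 t}\Psi_{i,s_i})(\mathsf{pert}(x))|$ obeys these bounds, where $\mathcal U_F f=f\circ F$.)
   Context: Each $\mathbb{C}^{d_i}$ carries a fixed norm $\|\cdot\|$, matrices carry the induced operator norm. The linear chained cascade map is $\mathsf{Lin}(x_1,\dots,x_n)=(L_1x_1,\;L_2x_2+C_{2,1}x_1,\;\dots,\;L_nx_n+C_{n,n-1}x_{n-1})$, the nominal map is $\mathsf{Nom}(x_1,\dots,x_n)=(L_1x_1,\dots,L_nx_n)$, and $\mathsf{F}^{\circ t}$ is the $t$-fold iterate. The principal eigenfunction $\psi_{i,s}:\mathbb{C}^{d_i}\to\mathbb{C}$ is $\psi_{i,s}(x_i)=\hat e_s^{*}V_i^{-1}x_i$, where $\hat e_s$ is the $s$-th standard basis vector of $\mathbb{C}^{d_i}$; $\|\psi_{i,s}\|$ is its norm as a linear functional on $(\mathbb{C}^{d_i},\|\cdot\|)$; and $\Psi_{i,s}(x_1,\dots,x_n)=\psi_{i,s}(x_i)$ is its trivial extension to $\mathbb{C}^{d_1}\times\cdots\times\mathbb{C}^{d_n}$. Matrices $D_{i,j}$ ($1\le j\le i\le n$) are defined recursively in $i$: $D_{i,i}=I_{d_i}$; for $i\ge 2$, $1\le j\le i-1$, $[\tilde C_{i,j}]_{\ell,m}=[V_i^{-1}C_{i,i-1}D_{i-1,j}V_j]_{\ell,m}(1-\lambda_{j,m}/\lambda_{i,\ell})^{-1}$ and $D_{i,j}=L_i^{-1}V_i\tilde C_{i,j}V_j^{-1}$. Define $\mathsf{pert}_1(x_1)=x_1$,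 $\mathsf{pert}_i(x_1,\dots,x_i)=x_i+\sum_{j=1}^{i-1}(-1)^{i-1-j}D_{i,j}\mathsf{pert}_j(x_1,\dots,x_j)$ for $i\ge2$, and $\mathsf{pert}(x)=(\mathsf{pert}_1(x_1),\dots,\mathsf{pert}_n(x_1,\dots,x_n))$. *)

(* Defs.v *)
(* R : realType, complex numbers C := R[i] (mathcomp-real-closed),
   limits from MathComp-Analysis. Blocks are indexed 0-based by nat: block i here
   is block i+1 of the paper. *)
From HB Require Import structures.
From mathcomp Require Import all_boot all_order all_algebra.
From mathcomp Require Import complex.
From mathcomp Require Import all_classical all_reals topology normedtype sequences.

Set Implicit Arguments.
Unset Strict Implicit.
Unset Printing Implicit Defensive.

Import Order.TTheory GRing.Theory Num.Theory.
Local Open Scope ring_scope.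
Local Open Scope classical_set_scope.

Section CascadeDefs.
Variable R : realType.
Local Notation C := R[i].

Definition cmod (z : C) : R := Normc.normc z.

Definition is_norm (k : nat) (N : 'cV[C]_k -> R) : Prop :=
  [/\ forall x, N x = 0 -> x = 0,
      forall (a : C) x, N (a *: x) = cmod a * N x &
      forall x y, N (x + y) <= N x + N y].

Definition opnorm (m k : nat) (Nm : 'cV[C]_m -> R) (Nk : 'cV[C]_k -> R)
  (A : 'M[C]_(m, k)) : R :=
  sup [set Nm (A *m x) | x in [set x : 'cV[C]_k | Nk x <= 1]].

Definition fnorm (k : nat) (Nk : 'cV[C]_k -> R) (f : 'cV[C]_k -> C) : R :=
  sup [set cmod (f x) | x in [set x : 'cV[C]_k | Nk x <= 1]].

Definition psi (k : nat) (V : 'M[C]_k) (s : 'I_k) (y : 'cV[C]_k) : C :=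
  (invmx V *m y) s ord0.

Variable d : nat -> nat.
Variable L : forall i, 'M[C]_(d i).
(* Cc i is the paper's C_{i+2,i+1} : C^{d_{i+1}} -> C^{d_{i+2}} (coupling block i -> i+1) *)
Variable Cc : forall i, 'M[C]_(d i.+1, d i).
Variable V : forall i, 'M[C]_(d i).
Variable lam : forall i, 'rV[C]_(d i).

Definition state := forall i, 'cV[C]_(d i).

Definition Lin (x : state) : state := fun i =>
  match i return 'cV[C]_(d i) with
  | 0 => L 0 *m x 0
  | i'.+1 => L i'.+1 *m x i'.+1 + Cc i' *m x i'
  end.

Definition Nom (x : state) : state := fun i => L i *m x i.

Definition Psi (i : nat) (s : 'I_(d i)) (x : state) : C := psi (V i) s (x i).

(* identity matrix when j = i (zero otherwise; only used with j = i) *)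
Definition idm (i j : nat) : 'M[C]_(d i, d j) :=
  \matrix_(l, m) ((j == i) && (l == m :> nat))%:R.

Fixpoint Dm (i j : nat) {struct i} : 'M[C]_(d i, d j) :=
  match i return 'M[C]_(d i, d j) with
  | 0 => idm 0 j
  | i'.+1 =>
      if (j < i'.+1)%N then
        invmx (L i'.+1) *m V i'.+1 *m
        (\matrix_(l, m)
           ((invmx (V i'.+1) *m Cc i' *m Dm i' j *m V j) l m
             * (1 - lam j ord0 m / lam i'.+1 ord0 l)^-1))
        *m invmx (V j)
      else idm i'.+1 j
  end.

(* pertF x f i = pert_i(x) as soon as f >= i (fuel-based strong recursion) *)
Fixpoint pertF (x : state) (f i : nat) {struct f} : 'cV[C]_(d i) :=
  match f with
  | 0 => x i
  | f'.+1 => x i + \sum_(j < i) ((-1) ^+ (i - j.+1)%N) *: (Dm i j *m pertF x f' j)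
  end.

Definition pert (x : state) : state := fun i => pertF x i i.

End CascadeDefs.

(* Main.v *)
Require Import Defs.
From HB Require Import structures.
From mathcomp Require Import all_boot all_order all_algebra.
From mathcomp Require Import complex.
From mathcomp Require Import all_classical all_reals topology normedtype sequences.
Import Order.TTheory GRing.Theory Num.Theory.
Import numFieldNormedType.Exports.
Local Open Scope ring_scope.
Local Open Scope classical_set_scope.
From mathcomp Require Import derive zify ring lra.
Local Open Scope complex_scope.
Local Open Scope ring_scope.

Lemma cmod_ge0 (R : realType) (z : R[i]) : 0 <= cmod z.
Proof. by case: z => a b; rewrite /cmod /Normc.normc sqrtr_ge0. Qed.

Lemma cmod_Cpx (R : realType) (a b : R) : cmod (a +i* b) = Num.sqrt (a ^+ 2 + b ^+ 2).
Proof. by rewrite /cmod /Normc.normc. Qed.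

Lemma cmod_le (R : realType) (a b : R) : cmod (a +i* b) <= `|a| + `|b|.
Proof.
rewrite cmod_Cpx.
have h0 : 0 <= `|a| + `|b| by rewrite addr_ge0.
have h : a ^+ 2 + b ^+ 2 <= (`|a| + `|b|) ^+ 2.
  rewrite sqrrD -[a ^+ 2]real_normK ?num_real // -[b ^+ 2]real_normK ?num_real //.
  have := mulr_ge0 (normr_ge0 a) (normr_ge0 b).
  move: (`|a|) (`|b|) => x y hxy; rewrite mulr2n; lra.
apply: (le_trans (_ : _ <= Num.sqrt ((`|a| + `|b|) ^+ 2))).
  by rewrite ler_sqrt // sqr_ge0.
by rewrite sqrtr_sqr ger0_norm.
Qed.

Lemma cmod_geRe (R : realType) (a b : R) : `|a| <= cmod (a +i* b).
Proof.
by rewrite cmod_Cpx -sqrtr_sqr ler_sqrt ?addr_ge0 ?sqr_ge0 // lerDl sqr_ge0.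
Qed.

Lemma cmod_geIm (R : realType) (a b : R) : `|b| <= cmod (a +i* b).
Proof.
by rewrite cmod_Cpx -sqrtr_sqr ler_sqrt ?addr_ge0 ?sqr_ge0 // lerDr sqr_ge0.
Qed.

Lemma cmodR (R : realType) (a : R) : cmod (a%:C) = `|a|.
Proof. by rewrite -complexr0 cmod_Cpx expr0n /= addr0 sqrtr_sqr. Qed.

Lemma cmodM (R : realType) (a b : R[i]) : cmod (a * b) = cmod a * cmod b.
Proof. exact: Normc.normcM. Qed.

Lemma cmodD (R : realType) (a b : R[i]) : cmod (a + b) <= cmod a + cmod b.
Proof. exact: le_normcD. Qed.

Lemma cmod0 (R : realType) : cmod (0 : R[i]) = 0.
Proof. exact: Normc.normc0. Qed.

Lemma cmodN (R : realType) (a : R[i]) : cmod (- a) = cmod a.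
Proof. exact: normcN. Qed.

Lemma cmod_eq0 (R : realType) (a : R[i]) : cmod a = 0 -> a = 0.
Proof. exact: Normc.eq0_normc. Qed.

Arguments cmod_ge0 {R}.
Arguments cmod_Cpx {R}.
Arguments cmod_le {R}.
Arguments cmod_geRe {R}.
Arguments cmod_geIm {R}.
Arguments cmodR {R}.
Arguments cmodM {R}.
Arguments cmodD {R}.
Arguments cmod0 {R}.
Arguments cmodN {R}.
Arguments cmod_eq0 {R}.

Lemma N0 (R : realType) k (N : 'cV[R[i]]_k -> R) : is_norm N -> N 0 = 0.
Proof. by case=> _ hZ _; rewrite -(scale0r (0 : 'cV[R[i]]_k)) hZ cmod0 mul0r. Qed.

Lemma NN (R : realType) k (N : 'cV[R[i]]_k -> R) x : is_norm N -> N (- x) = N x.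
Proof.
case=> _ hZ _; rewrite -scaleN1r hZ cmodN.
have c1 : cmod (1 : R[i]) = 1 by exact: Normc.normc1.
by rewrite c1 mul1r.
Qed.

Lemma Nge0 (R : realType) k (N : 'cV[R[i]]_k -> R) x : is_norm N -> 0 <= N x.
Proof.
move=> hN; have [_ _ hD] := hN.
have := hD x (- x); rewrite subrr N0 // NN // => h.
by rewrite -(@pmulrn_lge0 _ _ 2) // mulr2n.
Qed.

Lemma Nsum (R : realType) k (N : 'cV[R[i]]_k -> R) (I : Type) (r : seq I) (P : pred I) f :
  is_norm N -> N (\sum_(i <- r | P i) f i) <= \sum_(i <- r | P i) N (f i).
Proof.
move=> hN; have [_ _ hD] := hN.
apply: (big_ind2 (fun x y => N x <= y)); first by rewrite N0.
  by move=> x1 y1 x2 y2 h1 h2; apply: le_trans (hD _ _) (lerD h1 h2).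
by [].
Qed.

Lemma Nupper (R : realType) k (N : 'cV[R[i]]_k -> R) x : is_norm N ->
  N x <= \sum_(p < k) cmod (x p 0) * N (delta_mx p 0).
Proof.
move=> hN; have [_ hZ _] := hN.
rewrite {1}(matrix_sum_delta x).
apply: (le_trans (Nsum _ _ _ _ _ _ _ hN)); apply: ler_sum => p _.
by rewrite big_ord1 hZ.
Qed.
Arguments N0 {R k N}.
Arguments NN {R k N}.
Arguments Nge0 {R k N}.
Arguments Nsum {R k N I}.
Arguments Nupper {R k N}.

Definition cpl (R : realType) k (v : 'rV[R]_(k + k)) : 'cV[R[i]]_k :=
  \col_p (v 0 (lshift k p) +i* v 0 (rshift k p)).
Definition cre (R : realType) (z : R[i]) : R := let: Complex a _ := z in a.
Definition cim (R : realType) (z : R[i]) : R := let: Complex _ b := z in b.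
Arguments cre {R}.
Arguments cim {R}.
Definition dcp (R : realType) k (x : 'cV[R[i]]_k) : 'rV[R]_(k + k) :=
  row_mx (\row_p cre (x p 0)) (\row_p cim (x p 0)).

Arguments cpl {R k}.
Arguments dcp {R k}.

Lemma cpl_dcp (R : realType) k (x : 'cV[R[i]]_k) : cpl (dcp x) = x.
Proof.
apply/matrixP => p j; rewrite ord1 mxE row_mxEl row_mxEr !mxE.
by case: (x p 0).
Qed.

Lemma dcp_cpl (R : realType) k (v : 'rV[R]_(k + k)) : dcp (cpl v) = v.
Proof.
rewrite -[RHS]hsubmxK /dcp; congr row_mx; apply/matrixP => i j;
  by rewrite !mxE ord1.
Qed.

Lemma cplB (R : realType) k (v w : 'rV[R]_(k + k)) : cpl (v - w) = cpl v - cpl w.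
Proof. by apply/matrixP => p j; rewrite !mxE. Qed.

Lemma cplZ (R : realType) k (a : R) (v : 'rV[R]_(k + k)) : cpl (a *: v) = a%:C *: cpl v.
Proof. apply/matrixP => p j; rewrite !mxE; simpc; done. Qed.

Lemma mx_entry_le (R : realType) k (u : 'rV[R]_k) q : `|u 0 q| <= `|u|.
Proof.
rewrite [leRHS]/Num.Def.normr /= mx_normrE; apply/bigmax_geP; right => /=.
by exists (ord0, q) => //=; rewrite ord1.
Qed.

Lemma N_cpl_le (R : realType) k (N : 'cV[R[i]]_k -> R) (u : 'rV[R]_(k + k)) :
  is_norm N -> N (cpl u) <= (\sum_(p < k) 2 * N (delta_mx p 0)) * `|u|.
Proof.
move=> hN; apply: (le_trans (Nupper (cpl u) hN)); rewrite mulr_suml; apply: ler_sum => p _.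
rewrite mxE [2 * _]mulrC -mulrA [X in X <= _]mulrC.
apply: ler_wpM2l; first exact: Nge0.
apply: (le_trans (cmod_le _ _)); rewrite mulr_natl mulr2n.
by apply: lerD; apply: mx_entry_le.
Qed.

Lemma g_cont (R : realType) k (N : 'cV[R[i]]_k -> R) :
  is_norm N -> continuous (fun v : 'rV[R]_(k + k) => N (cpl v)).
Proof.
move=> hN; have [_ _ hD] := hN.
set K := \sum_(p < k) 2 * N (delta_mx p 0).
have K0 : 0 <= K by apply: sumr_ge0 => p _; rewrite mulr_ge0 ?Nge0.
move=> v; apply/(@cvgrPdist_le _ _ _ _ (nbhs_filter v)) => e e0.
have e1 : 0 < e / (K + 1) by rewrite divr_gt0 // ltr_wpDl.
near=> w.
have h : `|N (cpl v) - N (cpl w)| <= N (cpl (v - w)).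
  have t1 := hD (cpl v - cpl w) (cpl w); rewrite subrK in t1.
  have t2 := hD (cpl w - cpl v) (cpl v); rewrite subrK -opprB NN // in t2.
  rewrite cplB ler_norml; apply/andP; split; lra.
apply: (le_trans h); apply: (le_trans (N_cpl_le _ _ _ _ hN)).
have hw : `|v - w| <= e / (K + 1).
  by near: w; exact: (@cvgr_dist_le _ _ _ (nbhs v) _ id v cvg_id _ e1).
apply: (le_trans (ler_wpM2l K0 hw)).
rewrite mulrA ler_pdivrMr ?ltr_wpDl //; nra.
Unshelve. all: by end_near.
Qed.
Arguments cpl_dcp {R k}.
Arguments dcp_cpl {R k}.
Arguments cplB {R k}.
Arguments cplZ {R k}.
Arguments mx_entry_le {R k}.
Arguments g_cont {R k N}.

Lemma face_min (R : realType) k (N : 'cV[R[i]]_k -> R) (p : 'I_(k + k)) :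
  is_norm N -> exists m, 0 < m /\ forall w : 'rV[R]_(k + k), w 0 p = 1 ->
    (forall q, `|w 0 q| <= 1) -> m <= N (cpl w).
Proof.
move=> hN.
pose Af := fun q : 'I_(k + k) => if q == p then `[1, 1]%classic else `[-1, 1]%classic : set R.
pose A := [set v : 'rV[R]_(k + k) | forall q, Af q (v ord0 q)].
have cA : compact A.
  have hc : forall q, compact (Af q).
    move=> q; rewrite /Af; by case: (q == p); [exact: (@segment_compact R 1 1) | exact: (@segment_compact R (-1) 1)].
  exact: (rV_compact hc).
have A0 : A !=set0.
  exists (\row_q (if q == p then 1 else 0)) => q; rewrite /Af mxE.
  case: (q == p) => /=; rewrite in_itv /=; [by rewrite lexx | by rewrite lerN10 ler01].
have [c cA' cmin] := compact_EVT_min A0 cA (continuous_subspaceT (g_cont hN)).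
exists (N (cpl c)); split.
  rewrite lt_def Nge0 // andbT; apply/eqP; have [h0 _ _] := hN; move=> /h0 c0.
  have : c = 0.
    rewrite -(dcp_cpl c) c0 /dcp.
    have -> : \row_p cre ((0 : 'cV[R[i]]_k) p 0) = 0 by apply/rowP => q; rewrite !mxE.
    have -> : \row_p cim ((0 : 'cV[R[i]]_k) p 0) = 0 by apply/rowP => q; rewrite !mxE.
    by rewrite row_mx0.
  move=> c00; move: cA'; rewrite inE => /(_ p); rewrite /Af eqxx c00 mxE /= in_itv /=.
  by rewrite ler10.
move=> w wp wq; apply: cmin; rewrite inE => q; rewrite /Af.
case: eqP => [->|_] /=; rewrite in_itv /=; first by rewrite wp lexx.
by rewrite -ler_norml.
Qed.
Arguments face_min {R k N}.

Lemma norm_lower (R : realType) k (N : 'cV[R[i]]_k -> R) :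
  is_norm N -> exists c, 0 < c /\ forall (x : 'cV[R[i]]_k) (q : 'I_k), cmod (x q 0) <= c * N x.
Proof.
move=> hN; have [_ hZ _] := hN.
have [mf hmf] := choice (fun p : 'I_(k + k) => face_min p hN).
set S := \sum_p (mf p)^-1.
have S0 : 0 <= S by apply: sumr_ge0 => p _; rewrite invr_ge0 ltW // (hmf p).1.
exists (2 * (1 + S)); split; first by rewrite mulr_gt0 // ltr_wpDr.
move=> x q; set u := dcp x.
case: (@arg_maxP _ _ _ (lshift k q) xpredT (fun p => `|u 0 p|) isT) => p _ hp.
set M := `|u 0 p|.
have hM : M <= N x * S.
  have [M0|Mpos] := eqVneq M 0; first by rewrite M0 mulr_ge0 // Nge0.
  have Mp : 0 < M by rewrite lt_def Mpos normr_ge0.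
  have up0 : u 0 p != 0 by rewrite -normr_gt0.
  pose w := (u 0 p)^-1 *: u.
  have h1 : w 0 p = 1 by rewrite mxE mulVf.
  have h2 : forall q', `|w 0 q'| <= 1.
    move=> q'; rewrite mxE normrM normrV ?unitfE // ler_pdivrMl //.
    by rewrite mulr1; exact: (hp q' isT).
  have := (hmf p).2 w h1 h2.
  rewrite /w cplZ hZ cpl_dcp cmodR normrV ?unitfE // -/M => hle.
  apply: (le_trans (y := N x / mf p)).
    rewrite ler_pdivlMr ?(hmf p).1 //.
    by have := ler_wpM2l (ltW Mp) hle; rewrite mulrA mulfV // mul1r.
  rewrite ler_wpM2l ?Nge0 // /S (bigD1 p) //= lerDl.
  by apply: sumr_ge0 => i _; rewrite invr_ge0 ltW // (hmf i).1.
have hx : x q 0 = u 0 (lshift k q) +i* u 0 (rshift k q).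
  by rewrite -{1}(cpl_dcp x) mxE.
rewrite hx; apply: (le_trans (cmod_le _ _)).
apply: (le_trans (y := M + M)); first by apply: lerD; exact: (hp _ isT).
have NS : 0 <= N x * S by rewrite mulr_ge0 ?Nge0.
have Nx : 0 <= N x by rewrite Nge0.
nra.
Qed.

Lemma pertF_fuel {R : realType} {d : nat -> nat} (L : forall i, 'M[R[i]]_(d i))
  (Cc : forall i, 'M[R[i]]_(d i.+1, d i)) (V : forall i, 'M[R[i]]_(d i))
  (lam : forall i, 'rV[R[i]]_(d i)) x :
  forall f g i, (i <= f)%N -> (i <= g)%N ->
  pertF L Cc V lam x f i = pertF L Cc V lam x g i.
Proof.
elim=> [|f IH] [|g] i hf hg //=.
- have hi : i = 0%N by lia.
  by subst i; rewrite big_ord0 addr0.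
- have hi : i = 0%N by lia.
  by subst i; rewrite big_ord0 addr0.
- congr (_ + _); apply: eq_bigr => j _; rewrite (IH g) //.
    by have := ltn_ord j; lia.
  by have := ltn_ord j; lia.
Qed.

Lemma pert_eq {R : realType} {d : nat -> nat} (L : forall i, 'M[R[i]]_(d i))
  (Cc : forall i, 'M[R[i]]_(d i.+1, d i)) (V : forall i, 'M[R[i]]_(d i))
  (lam : forall i, 'rV[R[i]]_(d i)) x i :
  pert L Cc V lam x i = x i + \sum_(j < i) (-1) ^+ (i - j.+1) *: (Dm L Cc V lam i j *m pert L Cc V lam x j).
Proof.
case: i => [|i]; first by rewrite /pert /= big_ord0 addr0.
rewrite /pert /=; congr (_ + _); apply: eq_bigr => j _.
by rewrite (pertF_fuel L Cc V lam x i j) //; have := ltn_ord j; lia.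
Qed.

Definition Qm {R : realType} {d : nat -> nat} (L : forall i, 'M[R[i]]_(d i))
  (Cc : forall i, 'M[R[i]]_(d i.+1, d i)) (V : forall i, 'M[R[i]]_(d i))
  (lam : forall i, 'rV[R[i]]_(d i)) (y : state R d) : state R d := fun i =>
  y i + \sum_(j < i) (-1) ^+ (i - j) *: (Dm L Cc V lam i j *m y j).

Lemma Q_pert {R : realType} {d : nat -> nat} (L : forall i, 'M[R[i]]_(d i))
  (Cc : forall i, 'M[R[i]]_(d i.+1, d i)) (V : forall i, 'M[R[i]]_(d i))
  (lam : forall i, 'rV[R[i]]_(d i)) x i :
  Qm L Cc V lam (pert L Cc V lam x) i = x i.
Proof.
rewrite /Qm pert_eq -addrA -big_split /= big1 ?addr0 // => j _.
rewrite -scalerDl -(subnSK (ltn_ord j)) exprS mulN1r addrN.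
by rewrite scale0r.
Qed.

Lemma Lin_local {R : realType} {d : nat -> nat} (L : forall i, 'M[R[i]]_(d i))
  (Cc : forall i, 'M[R[i]]_(d i.+1, d i)) (z z' : state R d) i :
  (forall j, (j <= i)%N -> z j = z' j) -> Lin L Cc z i = Lin L Cc z' i.
Proof.
case: i => [|i] h /=; first by rewrite (h 0%N).
by rewrite (h i.+1) ?(h i) // leqW.
Qed.

Lemma iterLin_local {R : realType} {d : nat -> nat} (L : forall i, 'M[R[i]]_(d i))
  (Cc : forall i, 'M[R[i]]_(d i.+1, d i)) t (z z' : state R d) i :
  (forall j, (j <= i)%N -> z j = z' j) ->
  iter t (Lin L Cc) z i = iter t (Lin L Cc) z' i.
Proof.
elim: t i => [|t IH] i h /=; first exact: h i (leqnn i).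
apply: Lin_local => j hj; apply: IH => k hk; apply: h; exact: leq_trans hk hj.
Qed.

Lemma iter_Nom {R : realType} {d : nat -> nat} (L : forall i, 'M[R[i]]_(d i))
  t (y : state R d) i : iter t (Nom L) y i = L i ^+ t *m y i.
Proof.
elim: t => [|t IH] /=; first by rewrite expr0 mul1mx.
by rewrite /Nom IH mulmxA exprS mulmxE.
Qed.

Lemma col_eig {R : realType} k (Lk Vk : 'M[R[i]]_k) (lk : 'rV[R[i]]_k) l :
  Vk \in unitmx -> Lk *m Vk = Vk *m diag_mx lk ->
  col l Vk != 0 /\ Lk *m col l Vk = lk 0 l *: col l Vk.
Proof.
move=> hV hLV; split.
  apply/negP => /eqP h0.
  have : col l (invmx Vk *m Vk) = 0 by rewrite colE -mulmxA -colE h0 mulmx0.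
  rewrite mulVmx // => /matrixP /(_ l 0); rewrite !mxE eqxx /= => /eqP.
  by rewrite oner_eq0.
rewrite colE mulmxA hLV mul_mx_diag -!colE; apply/matrixP => p q.
by rewrite !mxE mulrC.
Qed.

Arguments col_eig {R k Lk Vk lk}.

Lemma lam_neq0 {R : realType} k (Lk Vk : 'M[R[i]]_k) (lk : 'rV[R[i]]_k) l :
  Lk \in unitmx -> Vk \in unitmx -> Lk *m Vk = Vk *m diag_mx lk -> lk 0 l != 0.
Proof.
move=> hL hV hLV; have [nz e] := col_eig l hV hLV.
apply/negP => /eqP h0; move: e; rewrite h0 scale0r => e.
move/negP: nz; apply; apply/eqP.
by rewrite -(mul1mx (col l Vk)) -(mulVmx hL) -mulmxA e mulmx0.
Qed.

Lemma lam_eigen {R : realType} k (Lk Vk : 'M[R[i]]_k) (lk : 'rV[R[i]]_k) l :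
  Vk \in unitmx -> Lk *m Vk = Vk *m diag_mx lk -> eigenvalue Lk (lk 0 l).
Proof.
move=> hV hLV; have [nz e] := col_eig l hV hLV.
rewrite /eigenvalue /eigenspace kermx_eq0 row_free_unit; apply/negP => hu.
move/negP: nz; apply; apply/eqP.
have h0 : (Lk - (lk 0 l)%:M) *m col l Vk = 0 by rewrite mulmxBl e mul_scalar_mx subrr.
by rewrite -(mul1mx (col l Vk)) -(mulVmx hu) -mulmxA h0 mulmx0.
Qed.
Arguments lam_neq0 {R k Lk Vk lk}.
Arguments lam_eigen {R k Lk Vk lk}.

Lemma sylv {R : realType} {d : nat -> nat} (n : nat) (L : forall i, 'M[R[i]]_(d i))
  (Cc : forall i, 'M[R[i]]_(d i.+1, d i)) (V : forall i, 'M[R[i]]_(d i))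
  (lam : forall i, 'rV[R[i]]_(d i)) :
  (forall i, (i < n)%N ->
     [/\ L i \in unitmx, V i \in unitmx & L i *m V i = V i *m diag_mx (lam i)]) ->
  (forall i j, (i < n)%N -> (j < n)%N -> i != j ->
     forall a : R[i], ~~ (eigenvalue (L i) a && eigenvalue (L j) a)) ->
  forall i j, (i.+1 < n)%N -> (j <= i)%N ->
  L i.+1 *m Dm L Cc V lam i.+1 j - Dm L Cc V lam i.+1 j *m L j = Cc i *m Dm L Cc V lam i j.
Proof.
move=> hL heig i j hi hj.
have hj' : (j < i.+1)%N by [].
have hjn : (j < n)%N by apply: leq_trans hi; rewrite ltnS ltnW.
have [hLu hVu hLV] := hL _ hi.
have [hLju hVju hLVj] := hL _ hjn.
have lne0 : forall l, lam i.+1 0 l != 0 := fun l => lam_neq0 l hLu hVu hLV.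
have ldis : forall l m, lam i.+1 0 l != lam j 0 m.
  move=> l m; apply/negP => /eqP e.
  have ij : i.+1 != j by rewrite neq_ltn ltnS hj orbT.
  have := heig _ _ hi hjn ij (lam i.+1 0 l).
  by rewrite (lam_eigen l hVu hLV) e (lam_eigen m hVju hLVj).
set X := invmx (V i.+1) *m Cc i *m Dm L Cc V lam i j *m V j.
pose Mf := fun l m => X l m * (1 - lam j 0 m / lam i.+1 0 l)^-1.
pose M := \matrix_(l, m) Mf l m.
pose M' := \matrix_(l, m) (Mf l m * (lam j 0 m / lam i.+1 0 l)).
have hD : Dm L Cc V lam i.+1 j = invmx (L i.+1) *m (V i.+1 *m M *m invmx (V j)).
  by rewrite [Dm _ _ _ _ i.+1 j]/= hj' !mulmxA.
have hM' : diag_mx (lam i.+1) *m M' = M *m diag_mx (lam j).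
  apply/matrixP => l m; rewrite mul_diag_mx mul_mx_diag !mxE.
  by field; rewrite lne0.
have hVL : invmx (V j) *m L j = diag_mx (lam j) *m invmx (V j).
  rewrite -[LHS]mulmx1 -(mulmxV hVju) !mulmxA -[invmx (V j) *m L j *m V j]mulmxA hLVj.
  by rewrite !mulmxA mulVmx // mul1mx.
have hDL : Dm L Cc V lam i.+1 j *m L j = V i.+1 *m M' *m invmx (V j).
  rewrite hD -!mulmxA hVL (mulmxA M) -hM' !mulmxA -(mulmxA (invmx (L i.+1))) -hLV.
  by rewrite mulKmx.
have hLD : L i.+1 *m Dm L Cc V lam i.+1 j = V i.+1 *m M *m invmx (V j).
  by rewrite hD mulKVmx.
rewrite hDL hLD -mulmxBl -mulmxBr.
have -> : M - M' = X.
  apply/matrixP => l m; rewrite ![in LHS]mxE /Mf.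
  have r0 : 1 - lam j 0 m / lam i.+1 0 l != 0.
    rewrite subr_eq0 eq_sym; apply/negP => /eqP e.
    have : lam j 0 m = lam i.+1 0 l by rewrite -[lam j 0 m](divfK (lne0 l)) e mul1r.
    by move/eqP; rewrite eq_sym (negbTE (ldis l m)).
  set q := lam j 0 m / lam i.+1 0 l; set x := X l m.
  by rewrite -{1}[x / (1 - q)]mulr1 -mulrBr divfK.
rewrite /X !mulmxA mulmxV // mul1mx -!mulmxA mulmxV // mulmx1.
by [].
Qed.

Lemma Dm_ii {R : realType} {d : nat -> nat} (L : forall i, 'M[R[i]]_(d i))
  (Cc : forall i, 'M[R[i]]_(d i.+1, d i)) (V : forall i, 'M[R[i]]_(d i))
  (lam : forall i, 'rV[R[i]]_(d i)) i : Dm L Cc V lam i i = 1%:M.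
Proof.
have -> : Dm L Cc V lam i i = idm R d i i by case: i => [|i] //=; rewrite ltnn.
by apply/matrixP => l m; rewrite !mxE eqxx.
Qed.

Lemma Lin_Q {R : realType} {d : nat -> nat} (n : nat) (L : forall i, 'M[R[i]]_(d i))
  (Cc : forall i, 'M[R[i]]_(d i.+1, d i)) (V : forall i, 'M[R[i]]_(d i))
  (lam : forall i, 'rV[R[i]]_(d i)) :
  (forall i, (i < n)%N ->
     [/\ L i \in unitmx, V i \in unitmx & L i *m V i = V i *m diag_mx (lam i)]) ->
  (forall i j, (i < n)%N -> (j < n)%N -> i != j ->
     forall a : R[i], ~~ (eigenvalue (L i) a && eigenvalue (L j) a)) ->
  forall (y : state R d) i, (i < n)%N ->
  Lin L Cc (Qm L Cc V lam y) i = Qm L Cc V lam (Nom L y) i.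
Proof.
move=> hL heig y [|i] hi.
  by rewrite /Lin /Qm /Nom !big_ord0 !addr0.
rewrite /Lin /Qm /Nom mulmxDr -addrA; congr (_ + _).
have E : forall j : 'I_i.+1, L i.+1 *m ((-1) ^+ (i.+1 - j) *: (Dm L Cc V lam i.+1 j *m y j)) =
   (-1) ^+ (i.+1 - j) *: (Cc i *m (Dm L Cc V lam i j *m y j)) +
   (-1) ^+ (i.+1 - j) *: (Dm L Cc V lam i.+1 j *m (L j *m y j)).
  move=> j; rewrite -scalemxAr -scalerDr; congr (_ *: _).
  have hs := sylv _ _ Cc _ _ hL heig _ _ hi (ltn_ord j : (j <= i)%N).
  move/eqP: hs; rewrite subr_eq => /eqP hs.
  by rewrite [LHS]mulmxA hs mulmxDl -!mulmxA.
rewrite mulmx_sumr (eq_bigr _ (fun j _ => E j)) big_split /=.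
set SB := \sum_(j < i.+1) _ *: (Dm L Cc V lam i.+1 j *m (L j *m y j)).
suff key : \sum_(j < i.+1) (-1) ^+ (i.+1 - j) *: (Cc i *m (Dm L Cc V lam i j *m y j)) +
   Cc i *m (y i + \sum_(j < i) (-1) ^+ (i - j) *: (Dm L Cc V lam i j *m y j)) = 0.
  by rewrite addrAC key add0r.
rewrite big_ord_recr /= mulmxDr mulmx_sumr.
have -> : (i.+1 - i)%N = 1%N by rewrite subSnn.
rewrite Dm_ii mul1mx expr1 scaleN1r.
rewrite (eq_bigr (fun j : 'I_i => - ((-1) ^+ (i - j) *: (Cc i *m (Dm L Cc V lam i j *m y j))))); last first.
  by move=> j _; rewrite subSn ?(ltnW (ltn_ord j)) // exprS mulN1r scaleNr.
under [X in _ + (_ + X)]eq_bigr do rewrite -scalemxAr.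
rewrite sumrN.
set S := \sum_(j < i) _; set c := Cc i *m y i.
by rewrite -opprD [c + S]addrC addNr.
Qed.

Lemma iter_Q {R : realType} {d : nat -> nat} (n : nat) (L : forall i, 'M[R[i]]_(d i))
  (Cc : forall i, 'M[R[i]]_(d i.+1, d i)) (V : forall i, 'M[R[i]]_(d i))
  (lam : forall i, 'rV[R[i]]_(d i)) :
  (forall i, (i < n)%N ->
     [/\ L i \in unitmx, V i \in unitmx & L i *m V i = V i *m diag_mx (lam i)]) ->
  (forall i j, (i < n)%N -> (j < n)%N -> i != j ->
     forall a : R[i], ~~ (eigenvalue (L i) a && eigenvalue (L j) a)) ->
  forall t (y : state R d) i, (i < n)%N ->
  iter t (Lin L Cc) (Qm L Cc V lam y) i = Qm L Cc V lam (iter t (Nom L) y) i.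
Proof.
move=> hL heig; elim=> [|t IH] y i hi //=.
rewrite -(Lin_Q _ _ _ _ _ hL heig _ _ hi); apply: Lin_local => j hj.
by apply: IH; exact: leq_ltn_trans hj hi.
Qed.

Lemma key_identity {R : realType} {d : nat -> nat} (n : nat) (L : forall i, 'M[R[i]]_(d i))
  (Cc : forall i, 'M[R[i]]_(d i.+1, d i)) (V : forall i, 'M[R[i]]_(d i))
  (lam : forall i, 'rV[R[i]]_(d i)) :
  (forall i, (i < n)%N ->
     [/\ L i \in unitmx, V i \in unitmx & L i *m V i = V i *m diag_mx (lam i)]) ->
  (forall i j, (i < n)%N -> (j < n)%N -> i != j ->
     forall a : R[i], ~~ (eigenvalue (L i) a && eigenvalue (L j) a)) ->
  forall t (x : state R d) i, (i < n)%N ->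
  iter t (Lin L Cc) x i - iter t (Nom L) (pert L Cc V lam x) i =
  \sum_(j < i) (-1) ^+ (i - j) *: (Dm L Cc V lam i j *m (L j ^+ t *m pert L Cc V lam x j)).
Proof.
move=> hL heig t x i hi.
rewrite (iterLin_local L Cc t x (Qm L Cc V lam (pert L Cc V lam x)) i); last first.
  by move=> j _; rewrite Q_pert.
rewrite (iter_Q _ _ _ _ _ hL heig) // /Qm addrAC subrr add0r.
by apply: eq_bigr => j _; rewrite iter_Nom.
Qed.
Arguments norm_lower {R k N}.
Lemma cmod_sum {R : realType} (I : Type) (r : seq I) (P : pred I) (f : I -> R[i]) :
  cmod (\sum_(i <- r | P i) f i) <= \sum_(i <- r | P i) cmod (f i).
Proof.
apply: (big_ind2 (fun x y => cmod x <= y)); first by rewrite cmod0.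
  by move=> x1 y1 x2 y2 h1 h2; apply: le_trans (cmodD _ _) (lerD h1 h2).
by [].
Qed.

Lemma entry_bound {R : realType} m k (N : 'cV[R[i]]_k -> R) c (B : 'M[R[i]]_(m, k)) s :
  0 <= c -> (forall (x : 'cV[R[i]]_k) q, cmod (x q 0) <= c * N x) ->
  forall y, cmod ((B *m y) s 0) <= (\sum_j cmod (B s j) * c) * N y.
Proof.
move=> c0 hc y; rewrite mxE mulr_suml; apply: (le_trans (cmod_sum _ _ _ _)).
apply: ler_sum => j _; rewrite cmodM -mulrA ler_wpM2l ?cmod_ge0 //.
Qed.

Lemma sup_bound {R : realType} k (N : 'cV[R[i]]_k -> R) (F : 'cV[R[i]]_k -> R) K :
  is_norm N -> 0 <= K -> (forall (a : R[i]) x, F (a *: x) = cmod a * F x) ->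
  (forall x, F x <= K * N x) ->
  0 <= sup [set F x | x in [set x | N x <= 1]] /\
  forall x, F x <= sup [set F x | x in [set x | N x <= 1]] * N x.
Proof.
move=> hN K0 hF hK.
set S := [set F x | x in [set x | N x <= 1]].
have F0 : F 0 = 0 by rewrite -(scale0r (0 : 'cV[R[i]]_k)) hF cmod0 mul0r.
have hS : has_sup S.
  split; first by exists (F 0), 0 => //=; rewrite N0.
  exists K => _ [x /= hx <-]; apply: (le_trans (hK x)).
  by rewrite -[leRHS]mulr1 ler_wpM2l.
have S0 : 0 <= sup S by rewrite -F0; apply: sup_upper_bound => //; exists 0 => //=; rewrite N0.
split => // x.
have [Nx0|Nxn] := eqVneq (N x) 0.
  have [h0 _ _] := hN; by rewrite (h0 _ Nx0) F0 N0 // mulr0.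
have Nxp : 0 < N x by rewrite lt_def Nxn Nge0.
have [_ hZ _] := hN.
set x' := ((N x)^-1)%:C *: x.
have Ni0 : 0 <= (N x)^-1 by rewrite invr_ge0 ltW.
have hx' : N x' = 1 by rewrite /x' hZ cmodR (ger0_norm Ni0) mulVf.
have : F x' <= sup S by apply: sup_upper_bound => //; exists x' => //=; rewrite hx'.
rewrite /x' hF cmodR (ger0_norm Ni0) => h.
by have := ler_wpM2r (ltW Nxp) h; rewrite mulrAC mulVf // mul1r.
Qed.

Lemma fnorm_prop {R : realType} k (N : 'cV[R[i]]_k -> R) (W : 'M[R[i]]_k) (s : 'I_k) :
  is_norm N ->
  0 <= fnorm N (psi W s) /\ forall x, cmod (psi W s x) <= fnorm N (psi W s) * N x.
Proof.
move=> hN; have [c [c0 hc]] := norm_lower hN.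
apply: (@sup_bound _ _ N (fun x => cmod (psi W s x)) (\sum_j cmod (invmx W s j) * c)) => //.
- by apply: sumr_ge0 => j _; rewrite mulr_ge0 ?cmod_ge0 ?ltW.
- by move=> a x; rewrite /psi -scalemxAr mxE cmodM.
- by move=> x; apply: entry_bound => //; rewrite ltW.
Qed.

Lemma opnorm_prop {R : realType} m k (Nm : 'cV[R[i]]_m -> R) (Nk : 'cV[R[i]]_k -> R)
  (A : 'M[R[i]]_(m, k)) : is_norm Nm -> is_norm Nk ->
  0 <= opnorm Nm Nk A /\ forall x, Nm (A *m x) <= opnorm Nm Nk A * Nk x.
Proof.
move=> hNm hNk; have [c [c0 hc]] := norm_lower hNk.
have [_ hZ _] := hNm.
apply: (@sup_bound _ _ Nk (fun x => Nm (A *m x))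
   (\sum_p (\sum_j cmod (A p j) * c) * Nm (delta_mx p 0))) => //.
- apply: sumr_ge0 => p _; rewrite mulr_ge0 ?Nge0 //.
  by apply: sumr_ge0 => j _; rewrite mulr_ge0 ?cmod_ge0 ?ltW.
- by move=> a x; rewrite -scalemxAr hZ.
- move=> x; apply: (le_trans (Nupper _ hNm)); rewrite mulr_suml; apply: ler_sum => p _.
  rewrite mulrAC; apply: ler_wpM2r; first exact: Nge0.
  by apply: entry_bound => //; rewrite ltW.
Qed.

Lemma opnorm_pow {R : realType} k (N : 'cV[R[i]]_k -> R) (A : 'M[R[i]]_k) :
  is_norm N -> forall t x, N (A ^+ t *m x) <= opnorm N N A ^+ t * N x.
Proof.
move=> hN; have [o0 ho] := opnorm_prop _ _ _ _ A hN hN.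
elim=> [|t IH] x; first by rewrite expr0 mul1mx mul1r.
rewrite exprS -mulmxE -mulmxA; apply: (le_trans (ho _)).
by rewrite exprS -mulrA ler_wpM2l.
Qed.

Lemma cmod_sign {R : realType} t : cmod ((-1) ^+ t : R[i]) = 1.
Proof.
elim: t => [|t IH]; first exact: Normc.normc1.
by rewrite exprS mulN1r cmodN IH.
Qed.
Lemma psiB {R : realType} k (W : 'M[R[i]]_k) s (a b : 'cV[R[i]]_k) :
  psi W s a - psi W s b = psi W s (a - b).
Proof. by rewrite /psi mulmxBr !mxE. Qed.

Lemma chain_le {R : realType} (a : nat -> R) n :
  (forall i, (i.+1 < n)%N -> a i < a i.+1) ->
  forall i j, (j <= i)%N -> (i < n)%N -> a j <= a i.
Proof.
move=> h; elim=> [|i IH] j hj hi; first by move: hj; rewrite leqn0 => /eqP ->.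
move: hj; rewrite leq_eqVlt => /orP [/eqP -> //|hj].
apply: (le_trans (IH j hj (ltnW hi))); exact: ltW (h i hi).
Qed.

Local Close Scope complex_scope.
Theorem theorem2 (R : realType) (n : nat) (d : nat -> nat)
  (N : forall i, 'cV[R[i]]_(d i) -> R)
  (L : forall i, 'M[R[i]]_(d i)) (Cc : forall i, 'M[R[i]]_(d i.+1, d i))
  (V : forall i, 'M[R[i]]_(d i)) (lam : forall i, 'rV[R[i]]_(d i)) :
  (0 < n)%N ->
  (forall i, (i < n)%N -> (0 < d i)%N) ->
  (forall i, (i < n)%N -> is_norm (N i)) ->
  (forall i, (i < n)%N ->
     [/\ L i \in unitmx, V i \in unitmx & L i *m V i = V i *m diag_mx (lam i)]) ->
  (forall i j, (i < n)%N -> (j < n)%N -> i != j ->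
     forall a : R[i], ~~ (eigenvalue (L i) a && eigenvalue (L j) a)) ->
  (forall i, (i.+1 < n)%N -> opnorm (N i) (N i) (L i) < opnorm (N i.+1) (N i.+1) (L i.+1)) ->
  opnorm (N n.-1) (N n.-1) (L n.-1) <= 1 ->
  forall (i : nat) (s : 'I_(d i)) (x : forall k, 'cV[R[i]]_(d k)), (i < n)%N ->
    (forall t : nat,
       cmod (Psi V s (iter t (Lin L Cc) x) - Psi V s (iter t (Nom L) (pert L Cc V lam x)))
       <= fnorm (N i) (psi (V i) s)
          * \sum_(j < i) opnorm (N i) (N j) (Dm L Cc V lam i j)
                         * N j (L j ^+ t *m pert L Cc V lam x j))
    /\
    (fun t : nat =>
       cmod (Psi V s (iter t (Lin L Cc) x) - Psi V s (iter t (Nom L) (pert L Cc V lam x)))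
       / opnorm (N i) (N i) (L i) ^+ t) @ \oo --> (0 : R).
Proof.
move=> n0 hd hN hL heig hch hlast i s x hi.
have hNi := hN i hi.
have [_ hZi _] := hNi.
have [f0 hf] := fnorm_prop _ (N i) (V i) s hNi.
set Delta := fun t : nat =>
  cmod (Psi V s (iter t (Lin L Cc) x) - Psi V s (iter t (Nom L) (pert L Cc V lam x))).
have bound : forall t, Delta t <= fnorm (N i) (psi (V i) s)
          * \sum_(j < i) opnorm (N i) (N j) (Dm L Cc V lam i j)
                         * N j (L j ^+ t *m pert L Cc V lam x j).
  move=> t; rewrite /Delta /Psi psiB (key_identity n L Cc V lam hL heig t x i hi).
  apply: (le_trans (hf _)); apply: ler_wpM2l => //.
  apply: (le_trans (Nsum _ _ _ hNi)); apply: ler_sum => j _.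
  have hj : (j < n)%N by apply: ltn_trans hi.
  rewrite hZi cmod_sign mul1r.
  exact: (opnorm_prop _ _ _ _ (Dm L Cc V lam i j) hNi (hN j hj)).2.
split; first exact: bound.
have D0 : forall t, 0 <= Delta t by move=> t; exact: cmod_ge0.
set a := fun j => opnorm (N j) (N j) (L j).
have a0 : forall j, (j < n)%N -> 0 <= a j.
  by move=> j hj; exact: (opnorm_prop _ _ _ _ (L j) (hN j hj) (hN j hj)).1.
have [i0|inz] := eqVneq i 0%N.
  have Z : forall t, Delta t = 0.
    move=> t; apply/eqP; rewrite eq_le D0 andbT.
    apply: (le_trans (bound t)); rewrite big1 ?mulr0 // => j.
    by move=> _; exfalso; have := ltn_ord j; lia.
  apply: (@squeeze_cvgr _ _ _ _ (cst 0) (cst 0)); last 2 first.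
  - exact: cvg_cst.
  - exact: cvg_cst.
  by near=> t; move: (Z t); rewrite /Delta /= => ->; rewrite mul0r lexx.
set b := a i.
have hi' : (i.-1.+1 < n)%N by rewrite prednK // lt0n.
have ab : a i.-1 < b by have := hch _ hi'; rewrite prednK // lt0n.
have hi1 : (i.-1 < n)%N by apply: ltn_trans hi'.
have b0 : 0 < b by apply: le_lt_trans (a0 _ hi1) ab.
set rho := a i.-1 / b.
have rho0 : 0 <= rho by rewrite divr_ge0 // ?a0 // ltW.
have rho1 : `|rho| < 1 by rewrite ger0_norm // ltr_pdivrMr // mul1r.
set K := fnorm (N i) (psi (V i) s) * \sum_(j < i) opnorm (N i) (N j) (Dm L Cc V lam i j)
          * N j (pert L Cc V lam x j).
have hK : forall t, Delta t / b ^+ t <= K * rho ^+ t.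
  move=> t; rewrite /rho exprMn exprVn mulrA ler_pdivrMr ?exprn_gt0 //.
  rewrite divfK ?expf_neq0 ?gt_eqF //.
  apply: (le_trans (bound t)); rewrite /K -mulrA ler_wpM2l // mulr_suml.
  apply: ler_sum => j _.
  have hj : (j < n)%N by apply: ltn_trans hi.
  have [oij0 _] := opnorm_prop _ _ _ _ (Dm L Cc V lam i j) hNi (hN j hj).
  rewrite -mulrA ler_wpM2l //.
  apply: (le_trans (opnorm_pow _ _ _ (hN j hj) t _)).
  rewrite mulrC; apply: ler_wpM2l; first exact: (Nge0 _ (hN j hj)).
  apply: (lerXn2r t); [rewrite nnegrE; exact: (a0 _ hj) | rewrite nnegrE; exact: (a0 _ hi1) |].
  apply: (chain_le a n hch) => //.
  by have := ltn_ord j; lia.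
apply: (@squeeze_cvgr _ _ _ _ (cst 0) (fun t => K * rho ^+ t)); last 2 first.
- exact: cvg_cst.
- have h := cvgMl_tmp (a:=K) (cvg_expr rho1); rewrite mulr0 in h; exact: h.
near=> t; move: (hK t) (D0 t); rewrite /Delta /= => -> h0; rewrite andbT divr_ge0 // exprn_ge0 // ltW //.
Unshelve. all: by end_near.
Qed.
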